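(* (a) For each integer $N\ge0$, the set $\{(a,b)\in P: N(a,b)\le N\}$ is relatively closed in $P$. (b) For every sequence $(a_\nu,b_\nu)$ in $P$ converging to a point of $P'\setminus\{(0,-1)\}$, one has $N(a_\nu,b_\nu)\to\infty$.
   Context: Let $P$ be the set of $(a,b)\in\mathbb{R}^2$ such that $h(x)=x^2+ax+b$ has no multiple root and $h(x)>0$ for all real $x$ with $|x|\ge1$ (equivalently: $a^2<4b$, or $a^2>4b$ and $|a|<\min\{2,b+1\}$). Let $P'=\{(a,b)\in\mathbb{R}^2: a^2=4b\ge4\}\cup\{(a,b)\in\mathbb{R}^2:|a|=b+1\le2\}$. For $(a,b)\in P$ let $C_{a,b}$ be the affine curve $y^2+(x^2-1)(x^2+ax+b)=0$, $\mathbb{R}[C_{a,b}]=\mathbb{R}[x,y]/(y^2+(x^2-1)(x^2+ax+b))$. For $g=u(x)+v(x)y$ put $\delta(g)=\max\{\deg u,\deg v+2\}$, and for $0\ne g$ let $\theta(g)$ be the least integer $e\ge0$ with $g=\sum_i g_i^2$, $g_i\in\mathbb{R}[C_{a,b}]$, $\delta(g_i)\le e$. Define $N(a,b):=\theta(1-x^2)$ computed in $\mathbb{R}[C_{a,b}]$. *)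

(* Defs.v *)
From Stdlib Require Import Reals List.
Open Scope R_scope.

(** Real polynomials in one variable x, given by coefficient lists
    [c0; c1; ...; cd] (low degree first). A list of length <= d+1
    represents a polynomial of degree <= d (trailing zeros allowed). *)
Definition peval (p : list R) (x : R) : R :=
  fold_right (fun c acc => c + x * acc) 0 p.

Definition h (a b x : R) : R := x ^ 2 + a * x + b.

Definition inP (a b : R) : Prop :=
  (~ exists r : R, forall x : R, h a b x = (x - r) ^ 2) /\
  (forall x : R, 1 <= Rabs x -> h a b x > 0).

Definition inP' (a b : R) : Prop :=
  (a ^ 2 = 4 * b /\ 4 * b >= 4) \/ (Rabs a = b + 1 /\ b + 1 <= 2).

(** Elements of R[C_{a,b}] = R[x,y]/(y^2 + (x^2-1) h(x)) in normal form
    u(x) + v(x) y, with u, v given as polynomial functions R -> R.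
    (Since R is infinite, equality of polynomials = equality of the
    associated functions, and {1, y} is an R[x]-basis of R[C].) *)
Definition CR := ((R -> R) * (R -> R))%type.

Definition cr_add (f g : CR) : CR :=
  (fun x => fst f x + fst g x, fun x => snd f x + snd g x).

(** Product, using y^2 = -(x^2 - 1) h(x). *)
Definition cr_mul (a b : R) (f g : CR) : CR :=
  (fun x => fst f x * fst g x
            + snd f x * snd g x * (- ((x ^ 2 - 1) * h a b x)),
   fun x => fst f x * snd g x + snd f x * fst g x).

Definition cr_zero : CR := (fun _ => 0, fun _ => 0).

Definition cr_eq (f g : CR) : Prop :=
  forall x : R, fst f x = fst g x /\ snd f x = snd g x.

Definition cr_of (g : list R * list R) : CR :=
  (peval (fst g), peval (snd g)).

(** delta(g) <= e for g = u + v y, where delta(g) = max(deg u, deg v + 2)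
    (deg 0 = -infinity): deg u <= e and deg v <= e - 2. *)
Definition delta_le (g : list R * list R) (e : nat) : Prop :=
  (length (fst g) <= e + 1)%nat /\ (length (snd g) <= e - 1)%nat.

Definition cr_sumsq (a b : R) (gs : list (list R * list R)) : CR :=
  fold_right (fun g acc => cr_add (cr_mul a b (cr_of g) (cr_of g)) acc)
             cr_zero gs.

(** theta(g) <= e in R[C_{a,b}]: g = sum g_i^2 with delta(g_i) <= e.
    (theta(g) is the least such e, so "theta(g) <= e" holds iff such a
    representation exists with bound e; theta(g) = infinity if none.) *)
Definition theta_le (a b : R) (g : CR) (e : nat) : Prop :=
  exists gs : list (list R * list R),
    Forall (fun gi => delta_le gi e) gs /\ cr_eq g (cr_sumsq a b gs).

Definition one_minus_x2 : CR := (fun x => 1 - x ^ 2, fun _ => 0).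

Definition N_le (a b : R) (n : nat) : Prop := theta_le a b one_minus_x2 n.

Definition rel_closed_in (P S : R -> R -> Prop) : Prop :=
  forall a b : R, P a b ->
    (forall eps : R, eps > 0 ->
       exists a' b' : R, P a' b' /\ S a' b' /\
         Rabs (a' - a) < eps /\ Rabs (b' - b) < eps) ->
    S a b.

(* Main.v *)
Require Import Defs.
From Stdlib Require Import Reals Lra Lia Psatz List IndefiniteDescription Rtopology.
Open Scope R_scope.


Fixpoint ssum (n : nat) (f : nat -> R) : R :=
  match n with O => 0 | S m => ssum m f + f m end.

Definition lsumL {X : Type} (l : list X) (f : X -> R) : R :=
  fold_right (fun x acc => f x + acc) 0 l.

Lemma ssum_ext n f g : (forall j, (j < n)%nat -> f j = g j) -> ssum n f = ssum n g.
Proof. induction n; simpl; intros H; [reflexivity|]. rewrite IHn by (intros; apply H; lia). rewrite H by lia. reflexivity. Qed.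

Lemma ssum_plus n f g : ssum n (fun j => f j + g j) = ssum n f + ssum n g.
Proof. induction n; simpl; [lra|]. rewrite IHn; lra. Qed.

Lemma ssum_minus n f g : ssum n (fun j => f j - g j) = ssum n f - ssum n g.
Proof. induction n; simpl; [lra|]. rewrite IHn; lra. Qed.

Lemma ssum_scal n c f : ssum n (fun j => c * f j) = c * ssum n f.
Proof. induction n; simpl; [lra|]. rewrite IHn; lra. Qed.

Lemma ssum_scal_r n c f : ssum n (fun j => f j * c) = ssum n f * c.
Proof. induction n; simpl; [lra|]. rewrite IHn; lra. Qed.

Lemma ssum_zero n : ssum n (fun _ => 0) = 0.
Proof. induction n; simpl; [lra|]. rewrite IHn; lra. Qed.

Lemma ssum_le n f g : (forall j, (j < n)%nat -> f j <= g j) -> ssum n f <= ssum n g.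
Proof. induction n; simpl; intros H; [lra|]. pose proof (H n ltac:(lia)). pose proof (IHn ltac:(intros; apply H; lia)). lra. Qed.

Lemma ssum_nonneg n f : (forall j, (j < n)%nat -> 0 <= f j) -> 0 <= ssum n f.
Proof. intros H. rewrite <- (ssum_zero n). apply ssum_le. exact H. Qed.

Lemma ssum_term_le n f j : (forall i, (i < n)%nat -> 0 <= f i) -> (j < n)%nat -> f j <= ssum n f.
Proof.
  induction n; simpl; intros H Hj; [lia|].
  assert (0 <= ssum n f) by (apply ssum_nonneg; intros; apply H; lia).
  destruct (Nat.eq_dec j n) as [->|Hne].
  - lra.
  - pose proof (H n ltac:(lia)). pose proof (IHn ltac:(intros; apply H; lia) ltac:(lia)). lra.
Qed.

Lemma ssum_shift n f : ssum (S n) f = f O + ssum n (fun i => f (S i)).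
Proof. induction n; simpl in *; [lra|]. rewrite IHn. lra. Qed.

Lemma ssum_mult n m f g : ssum n f * ssum m g = ssum n (fun p => ssum m (fun q => f p * g q)).
Proof.
  induction n; simpl; [lra|]. rewrite <- IHn. rewrite ssum_scal. lra.
Qed.

Lemma ssum_swap n m F : ssum n (fun p => ssum m (fun q => F p q)) = ssum m (fun q => ssum n (fun p => F p q)).
Proof.
  induction n; simpl. - rewrite ssum_zero; reflexivity.
  - rewrite IHn. rewrite <- ssum_plus. reflexivity.
Qed.

Lemma ssum_sq_le n f : (ssum n f)^2 <= INR n * ssum n (fun j => (f j)^2).
Proof.
  induction n. - simpl. lra.
  - change (ssum (S n) f) with (ssum n f + f n).
    change (ssum (S n) (fun j => f j ^ 2)) with (ssum n (fun j => f j ^ 2) + f n ^ 2).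
    rewrite S_INR.
    set (S0 := ssum n f) in *. set (Q0 := ssum n (fun j => f j ^ 2)) in *.
    set (N := INR n) in *. set (y := f n) in *.
    assert (HN : 0 <= N) by apply pos_INR.
    assert (HQ : 0 <= Q0) by (apply ssum_nonneg; intros; apply pow2_ge_0).
    destruct (Req_dec N 0) as [HN0|HN0].
    + rewrite HN0 in IHn. assert (S0 = 0) by nra. subst N. rewrite HN0, H. nra.
    + assert (HNp : 0 < N) by lra.
      assert (H1 : 0 <= (S0 - N * y)^2) by apply pow2_ge_0.
      assert (H3 : (N+1)*S0^2 <= (N+1)*(N*Q0)) by (apply Rmult_le_compat_l; lra).
      assert (H2 : N * (S0 + y)^2 <= N * ((N + 1) * (Q0 + y ^ 2))) by nra.
      apply Rmult_le_reg_l with N; lra.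
Qed.

Lemma lsumL_plus {X} (l : list X) f g : lsumL l (fun x => f x + g x) = lsumL l f + lsumL l g.
Proof. induction l; simpl; [lra|]. rewrite IHl; lra. Qed.

Lemma lsumL_scal {X} (l : list X) c f : lsumL l (fun x => c * f x) = c * lsumL l f.
Proof. induction l; simpl; [lra|]. rewrite IHl; lra. Qed.

Lemma lsumL_ext {X} (l : list X) f g : (forall x, In x l -> f x = g x) -> lsumL l f = lsumL l g.
Proof. induction l; simpl; intros H; [lra|]. rewrite H by auto. rewrite IHl by auto. reflexivity. Qed.

Lemma lsumL_le {X} (l : list X) f g : (forall x, In x l -> f x <= g x) -> lsumL l f <= lsumL l g.
Proof. induction l; simpl; intros H; [lra|]. pose proof (H a (or_introl eq_refl)). pose proof (IHl (fun x Hx => H x (or_intror Hx))). lra. Qed.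

Lemma lsumL_nonneg {X} (l : list X) f : (forall x, In x l -> 0 <= f x) -> 0 <= lsumL l f.
Proof. induction l; simpl; intros H; [lra|]. pose proof (H a (or_introl eq_refl)). pose proof (IHl (fun x Hx => H x (or_intror Hx))). lra. Qed.

Lemma lsumL_ssum {X} (l : list X) n F : lsumL l (fun x => ssum n (F x)) = ssum n (fun j => lsumL l (fun x => F x j)).
Proof.
  induction l; simpl. - rewrite ssum_zero; reflexivity.
  - rewrite IHl. rewrite <- ssum_plus. reflexivity.
Qed.

Lemma ssum_const n k : ssum n (fun _ => k) = INR n * k.
Proof. induction n; simpl ssum; [simpl; ring|]. rewrite IHn, S_INR. ring. Qed.


Lemma peval_ssum p n x : (length p <= n)%nat -> peval p x = ssum n (fun i => nth i p 0 * x ^ i).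
Proof.
  revert n; induction p as [|c p IH]; intros n Hn; simpl.
  - transitivity (ssum n (fun _ => 0)); [symmetry; apply ssum_zero|].
    apply ssum_ext. intros j _. destruct j; simpl; ring.
  - destruct n as [|m]; simpl in Hn; [lia|].
    rewrite ssum_shift. simpl. rewrite (IH m) by lia.
    rewrite <- ssum_scal. f_equal; [ring|]. apply ssum_ext. intros; ring.
Qed.

Fixpoint synth (x0 : R) (p : list R) : list R :=
  match p with
  | nil => nil
  | c :: p' => match p' with nil => nil | _ => peval p' x0 :: synth x0 p' end
  end.

Lemma synth_eval x0 p x : peval p x = peval p x0 + (x - x0) * peval (synth x0 p) x.
Proof.
  induction p as [|c p IH]; simpl. - ring.
  - destruct p as [|c' p'].
    + simpl. ring.
    + change (synth x0 (c :: c' :: p')) with (peval (c' :: p') x0 :: synth x0 (c' :: p')).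
      change (peval (peval (c' :: p') x0 :: synth x0 (c' :: p')) x)
        with (peval (c' :: p') x0 + x * peval (synth x0 (c' :: p')) x).
      rewrite IH at 1. ring.
Qed.

Lemma synth_len x0 p : length (synth x0 p) = pred (length p).
Proof.
  induction p as [|c p IH]; simpl; auto.
  destruct p as [|c' p']; simpl; auto.
Qed.

Lemma synth_coef x0 p i :
  nth i p 0 = (match i with O => peval p x0 | S i' => nth i' (synth x0 p) 0 end)
              - x0 * nth i (synth x0 p) 0.
Proof.
  revert i; induction p as [|c p IH]; intros i.
  - destruct i as [|[|i]]; simpl; ring.
  - destruct p as [|c' p'].
    + destruct i as [|[|[|i]]]; simpl; ring.
    + change (synth x0 (c :: c' :: p')) with (peval (c' :: p') x0 :: synth x0 (c' :: p')).
      destruct i as [|i].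
      * simpl. ring.
      * change (nth (S i) (c :: c' :: p') 0) with (nth i (c' :: p') 0).
        rewrite (IH i).
        change (nth (S i) (peval (c' :: p') x0 :: synth x0 (c' :: p')) 0) with (nth i (synth x0 (c' :: p')) 0).
        destruct i; simpl; ring.
Qed.

Lemma coef_interp n (X : nat -> R) :
  (forall j k, (j < k < n)%nat -> X j <> X k) ->
  exists W : nat -> nat -> R, forall i p, (length p <= n)%nat ->
    nth i p 0 = ssum n (fun j => W i j * peval p (X j)).
Proof.
  induction n as [|m IH]; intros Hd.
  - exists (fun _ _ => 0). intros i p Hp. destruct p; simpl in Hp; [|lia].
    destruct i; reflexivity.
  - destruct IH as [W' HW']. { intros j k Hjk. apply Hd. lia. }
    set (x0 := X m).
    set (Wq := fun i j => W' i j / (X j - x0)).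
    set (sq := fun i => ssum m (fun j => Wq i j)).
    set (prev := fun i j => match i with O => 0 | S i' => Wq i' j end).
    set (prevs := fun i => match i with O => -1 | S i' => sq i' end).
    exists (fun i j => if Nat.ltb j m then prev i j - x0 * Wq i j else - prevs i + x0 * sq i).
    intros i p Hp.
    set (q := synth x0 p).
    assert (Hq : (length q <= m)%nat) by (unfold q; rewrite synth_len; lia).
    assert (Hqv : forall i, nth i q 0 = ssum m (fun j => Wq i j * peval p (X j)) - sq i * peval p x0).
    { intros i0. rewrite (HW' i0 q Hq). unfold sq. rewrite <- ssum_scal_r, <- ssum_minus.
      apply ssum_ext. intros j Hj.
      assert (Hne : X j - x0 <> 0). { unfold x0. intro E. apply (Hd j m). lia. lra. }
      pose proof (synth_eval x0 p (X j)) as E. fold q in E. unfold Wq.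
      assert (peval q (X j) = (peval p (X j) - peval p x0) / (X j - x0)).
      { rewrite E. field. exact Hne. }
      rewrite H. field. exact Hne. }
    rewrite (synth_coef x0 p i). fold q.
    simpl. rewrite (ssum_ext m _ (fun j => (prev i j - x0 * Wq i j) * peval p (X j))).
    2:{ intros j Hj. apply Nat.ltb_lt in Hj. rewrite Hj. reflexivity. }
    rewrite Nat.ltb_irrefl.
    assert (Hpr : (match i with O => peval p x0 | S i' => nth i' q 0 end)
                  = ssum m (fun j => prev i j * peval p (X j)) - prevs i * peval p x0).
    { destruct i as [|i']; simpl.
      - rewrite (ssum_ext m _ (fun _ => 0)). 2:{ intros. unfold prev. ring. } rewrite ssum_zero. unfold prevs. ring.
      - rewrite Hqv. reflexivity. }
    rewrite Hpr, Hqv.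
    rewrite (ssum_ext m (fun j => (prev i j - x0 * Wq i j) * peval p (X j)) (fun j => prev i j * peval p (X j) - x0 * (Wq i j * peval p (X j)))) by (intros; ring).
    rewrite ssum_minus, ssum_scal. unfold x0. ring.
Qed.


Definition Usq (gs : list (list R * list R)) x := lsumL gs (fun g => (peval (fst g) x)^2).
Definition Vsq (gs : list (list R * list R)) x := lsumL gs (fun g => (peval (snd g) x)^2).
Definition Wuv (gs : list (list R * list R)) x := lsumL gs (fun g => peval (fst g) x * peval (snd g) x).

Lemma sumsq_fst a b gs x : fst (cr_sumsq a b gs) x = Usq gs x + Vsq gs x * (-((x^2-1) * h a b x)).
Proof.
  unfold Usq, Vsq. induction gs as [|g gs IH]; simpl. - ring.
  - rewrite IH. unfold cr_of. simpl. ring.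
Qed.

Lemma sumsq_snd a b gs x : snd (cr_sumsq a b gs) x = 2 * Wuv gs x.
Proof.
  unfold Wuv. induction gs as [|g gs IH]; simpl. - ring.
  - rewrite IH. unfold cr_of. simpl. ring.
Qed.

Lemma rep_iff a b gs : cr_eq one_minus_x2 (cr_sumsq a b gs) <->
  forall x, Usq gs x = (1 - x^2) * (1 - h a b x * Vsq gs x) /\ Wuv gs x = 0.
Proof.
  unfold cr_eq. split; intros H x; destruct (H x) as [H1 H2];
  rewrite sumsq_fst in *; rewrite sumsq_snd in *; simpl in *; split; lra.
Qed.

Lemma Usq_nonneg gs x : 0 <= Usq gs x.
Proof. apply lsumL_nonneg. intros; apply pow2_ge_0. Qed.
Lemma Vsq_nonneg gs x : 0 <= Vsq gs x.
Proof. apply lsumL_nonneg. intros; apply pow2_ge_0. Qed.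

Lemma node_bounds a b gs x c : cr_eq one_minus_x2 (cr_sumsq a b gs) ->
  x^2 < 1 -> 0 < c -> c <= h a b x -> Usq gs x <= 1 /\ Vsq gs x <= / c.
Proof.
  intros Hr Hx Hc Hh. destruct (proj1 (rep_iff a b gs) Hr x) as [HU _].
  pose proof (Usq_nonneg gs x). pose proof (Vsq_nonneg gs x).
  set (V := Vsq gs x) in *. set (U := Usq gs x) in *. set (hh := h a b x) in *.
  assert (H1 : 0 <= 1 - hh * V).
  { destruct (Rle_dec 0 (1 - hh * V)); [assumption|]. exfalso.
    assert ((1 - x^2) * (1 - hh * V) < 0). { apply Rmult_pos_neg; lra. } lra. }
  assert (H2 : 0 <= hh * V) by nra.
  split.
  - rewrite HU. assert (0 <= x^2) by apply pow2_ge_0. nra.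
  - assert (c * V <= 1) by nra.
    apply (Rmult_le_reg_l c); [lra|]. rewrite Rinv_r by lra. lra.
Qed.

Lemma coef_sq_le n (X : nat -> R) (W : nat -> nat -> R) p i :
  (forall i p, (length p <= n)%nat -> nth i p 0 = ssum n (fun j => W i j * peval p (X j))) ->
  (length p <= n)%nat -> (i < n)%nat ->
  (nth i p 0)^2 <= INR n * ssum n (fun i => ssum n (fun j => W i j ^ 2)) * ssum n (fun j => (peval p (X j))^2).
Proof.
  intros HW Hp Hi. rewrite (HW i p Hp).
  eapply Rle_trans; [apply ssum_sq_le|].
  rewrite Rmult_assoc. apply Rmult_le_compat_l; [apply pos_INR|].
  rewrite <- ssum_scal. apply ssum_le. intros j Hj.
  rewrite Rpow_mult_distr. apply Rmult_le_compat_r; [apply pow2_ge_0|].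
  eapply Rle_trans; [|apply (ssum_term_le n _ i)]; auto.
  - apply (ssum_term_le n (fun j => W i j ^ 2) j); auto. intros; apply pow2_ge_0.
  - intros; apply ssum_nonneg; intros; apply pow2_ge_0.
Qed.

Definition nodes_ok (n : nat) (X : nat -> R) := forall j k, (j < k < n)%nat -> X j <> X k.

Lemma coef_bound e (X : nat -> R) c : nodes_ok (S e) X -> 0 < c ->
  exists B, forall a b gs,
    (forall j, (j < S e)%nat -> X j ^ 2 < 1 /\ c <= h a b (X j)) ->
    Forall (fun gi => delta_le gi e) gs ->
    cr_eq one_minus_x2 (cr_sumsq a b gs) ->
    forall i, (i < S e)%nat ->
      lsumL gs (fun g => (nth i (fst g) 0)^2) <= B /\
      lsumL gs (fun g => (nth i (snd g) 0)^2) <= B.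
Proof.
  intros Hn Hc. destruct (coef_interp (S e) X Hn) as [W HW].
  set (Wb := ssum (S e) (fun i => ssum (S e) (fun j => W i j ^ 2))).
  assert (HWb : 0 <= Wb) by (apply ssum_nonneg; intros; apply ssum_nonneg; intros; apply pow2_ge_0).
  set (N := INR (S e)).
  assert (HN : 0 <= N) by apply pos_INR.
  exists (N * Wb * (N * (1 + / c))).
  intros a b gs Hx Hd Hr i Hi.
  assert (Hcs : 0 <= N * Wb) by (apply Rmult_le_pos; auto).
  assert (Hic : 0 < / c) by (apply Rinv_0_lt_compat; auto).
  split.
  - eapply Rle_trans. apply (lsumL_le gs _ (fun g => N * Wb * ssum (S e) (fun j => (peval (fst g) (X j))^2))).
    { intros g Hg. apply coef_sq_le; auto. rewrite Forall_forall in Hd. destruct (Hd g Hg). lia. }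
    rewrite lsumL_scal. apply Rmult_le_compat_l; auto.
    rewrite lsumL_ssum. fold (ssum (S e) (fun j => Usq gs (X j))).
    change (ssum (S e) (fun j => Usq gs (X j)) <= N * (1 + / c)).
    apply Rle_trans with (ssum (S e) (fun _ => 1 + / c)).
    + apply ssum_le. intros j Hj. destruct (Hx j Hj). pose proof (node_bounds a b gs (X j) c Hr). lra.
    + rewrite ssum_const. right. reflexivity.
  - eapply Rle_trans. apply (lsumL_le gs _ (fun g => N * Wb * ssum (S e) (fun j => (peval (snd g) (X j))^2))).
    { intros g Hg. apply coef_sq_le; auto. rewrite Forall_forall in Hd. destruct (Hd g Hg). lia. }
    rewrite lsumL_scal. apply Rmult_le_compat_l; auto.
    rewrite lsumL_ssum. fold (ssum (S e) (fun j => Vsq gs (X j))).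
    change (ssum (S e) (fun j => Vsq gs (X j)) <= N * (1 + / c)).
    apply Rle_trans with (ssum (S e) (fun _ => 1 + / c)).
    + apply ssum_le. intros j Hj. destruct (Hx j Hj). pose proof (node_bounds a b gs (X j) c Hr). lra.
    + rewrite ssum_const. right. reflexivity.
Qed.


Lemma h_pert a a' b b' x : Rabs x <= 1 -> Rabs (a' - a) <= 1 -> 
  h a b x - Rabs (a' - a) - Rabs (b' - b) <= h a' b' x.
Proof.
  intros Hx Ha. unfold h.
  assert (Rabs ((a' - a) * x) <= Rabs (a' - a)).
  { rewrite Rabs_mult. pose proof (Rabs_pos (a'-a)). nra. }
  pose proof (Rle_abs (-( (a'-a)*x))). rewrite Rabs_Ropp in H0.
  pose proof (Rle_abs (-(b'-b))). rewrite Rabs_Ropp in H1. lra.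
Qed.

Lemma good_nodes a b s : s * s = 1 -> 0 < h a b s ->
  exists X : nat -> R, (forall n, nodes_ok n X) /\
    forall j, X j ^ 2 < 1 /\ Rabs (X j) <= 1 /\ h a b s / 2 <= h a b (X j).
Proof.
  intros Hs Hh.
  set (d := Rmin 1 (h a b s / (2 + Rabs a))).
  assert (Ha : 0 <= Rabs a) by apply Rabs_pos.
  assert (Hd : 0 < d). { unfold d. apply Rmin_pos; [lra|]. apply Rdiv_lt_0_compat; lra. }
  assert (Hd1 : d <= 1) by apply Rmin_l.
  assert (Hd2 : d * (2 + Rabs a) <= h a b s).
  { unfold d. pose proof (Rmin_r 1 (h a b s / (2 + Rabs a))).
    apply Rmult_le_compat_r with (r := 2 + Rabs a) in H; [|lra].
    unfold Rdiv in H. rewrite Rmult_assoc, Rinv_l in H by lra. lra. }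
  exists (fun j => s * (1 - d / (INR j + 2))).
  assert (Ht : forall j, 0 < d / (INR j + 2) <= d / 2).
  { intros j. pose proof (pos_INR j). split.
    - apply Rdiv_lt_0_compat; lra.
    - unfold Rdiv. apply Rmult_le_compat_l; [lra|]. apply Rinv_le_contravar; lra. }
  assert (Hs' : Rabs s = 1).
  { destruct (Rle_dec 0 s). - rewrite Rabs_right by lra. nra. - rewrite Rabs_left by lra. nra. }
  split.
  - intros n j k Hjk E.
    assert (Hjk' : INR j < INR k) by (apply lt_INR; lia).
    pose proof (pos_INR j).
    assert (d / (INR j + 2) = d / (INR k + 2)).
    { assert (s * (s * (1 - d / (INR j + 2))) = s * (s * (1 - d / (INR k + 2)))) by (rewrite E; reflexivity).
      rewrite <- !Rmult_assoc, Hs in H0. lra. }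
    unfold Rdiv in H0. apply Rmult_eq_reg_l in H0; [|lra].
    assert (INR j + 2 = INR k + 2). { rewrite <- (Rinv_inv (INR j + 2)), H0, Rinv_inv. reflexivity. }
    lra.
  - intros j. destruct (Ht j) as [Ht1 Ht2]. set (t := d / (INR j + 2)) in *.
    split; [|split].
    + replace ((s * (1 - t)) ^ 2) with ((s * s) * ((1 - t) * (1 - t))) by ring. rewrite Hs. nra.
    + rewrite Rabs_mult, Hs'. rewrite Rabs_right by lra. lra.
    + assert (E : h a b (s * (1 - t)) - h a b s = (- s * t) * (s * (1 - t) + s + a)) by (unfold h; ring).
      assert (Rabs ((- s * t) * (s * (1 - t) + s + a)) <= t * (2 + Rabs a)).
      { rewrite Rabs_mult. replace (Rabs (- s * t)) with t.
        2:{ rewrite Rabs_mult, Rabs_Ropp, Hs', Rabs_right by lra. ring. }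
        apply Rmult_le_compat_l; [lra|].
        eapply Rle_trans; [apply Rabs_triang|].
        eapply Rle_trans; [apply Rplus_le_compat_r; apply Rabs_triang|].
        rewrite !Rabs_mult, Hs', Rabs_right by lra. lra. }
      pose proof (Rle_abs (-((- s * t) * (s * (1 - t) + s + a)))). rewrite Rabs_Ropp in H0.
      assert (t * (2 + Rabs a) <= d / 2 * (2 + Rabs a)) by (apply Rmult_le_compat_r; lra).
      lra.
Qed.


Lemma h_pert_up a a' b b' x : h a' b' x <= h a b x + Rabs (a' - a) * Rabs x + Rabs (b' - b).
Proof.
  unfold h. rewrite <- Rabs_mult.
  pose proof (Rle_abs ((a'-a)*x)). pose proof (Rle_abs (b'-b)). nra.
Qed.

Lemma V_bound e gs x T Bv : Forall (fun gi => delta_le gi e) gs ->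
  (forall i, (i < S e)%nat -> (x ^ i) ^ 2 <= T) ->
  (forall i, (i < S e)%nat -> lsumL gs (fun g => (nth i (snd g) 0)^2) <= Bv) ->
  0 <= T -> Vsq gs x <= INR (S e) * T * (INR (S e) * Bv).
Proof.
  intros Hd HT HB HT0. unfold Vsq.
  eapply Rle_trans.
  { apply (lsumL_le gs _ (fun g => INR (S e) * T * ssum (S e) (fun i => (nth i (snd g) 0)^2))).
    intros g Hg. rewrite Forall_forall in Hd. destruct (Hd g Hg) as [_ Hl].
    rewrite (peval_ssum (snd g) (S e)) by lia.
    eapply Rle_trans; [apply ssum_sq_le|].
    rewrite Rmult_assoc. apply Rmult_le_compat_l; [apply pos_INR|].
    rewrite <- ssum_scal. apply ssum_le. intros i Hi.
    rewrite Rpow_mult_distr. rewrite Rmult_comm. apply Rmult_le_compat_r; [apply pow2_ge_0|]. auto. }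
  rewrite lsumL_scal. apply Rmult_le_compat_l.
  { apply Rmult_le_pos; [apply pos_INR|auto]. }
  rewrite lsumL_ssum. rewrite <- ssum_const. apply ssum_le. auto.
Qed.

Lemma pow_sq_bound x R0 i n : x ^ 2 <= R0 -> (i <= n)%nat -> (x ^ i) ^ 2 <= (1 + R0) ^ n.
Proof.
  intros Hx Hi. rewrite <- pow_mult. rewrite Nat.mul_comm, pow_mult.
  assert (0 <= x^2) by apply pow2_ge_0.
  apply Rle_trans with ((1 + R0) ^ i).
  - apply pow_incr. lra.
  - apply Rle_pow; [lra|auto].
Qed.

Lemma partb_core (sa sb : nat -> R) a0 b0 r s :
  Un_cv sa a0 -> Un_cv sb b0 -> 1 <= r * r -> h a0 b0 r = 0 -> s * s = 1 -> 0 < h a0 b0 s ->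
  forall M : nat, exists K : nat, forall k : nat, (K <= k)%nat -> ~ N_le (sa k) (sb k) M.
Proof.
  intros Ha Hb Hr Hhr Hs Hhs M.
  destruct (good_nodes a0 b0 s Hs Hhs) as [X [HXok HX]].
  set (c := h a0 b0 s / 4).
  assert (Hc : 0 < c) by (unfold c; lra).
  destruct (coef_bound M X c (HXok (S M)) Hc) as [B HB].
  set (rho := Rabs r).
  assert (Hrho : 1 <= rho).
  { unfold rho. destruct (Rle_dec 0 r). - rewrite Rabs_right by lra. nra. - rewrite Rabs_left by lra. nra. }
  set (T := (1 + 4 * rho ^ 2) ^ S M).
  assert (HT0 : 0 <= T) by (apply pow_le; nra).
  set (C := INR (S M) * T * (INR (S M) * Rabs B) + 1).
  assert (HC : 0 < C).
  { unfold C. assert (0 <= INR (S M) * T * (INR (S M) * Rabs B)); [|lra].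
    apply Rmult_le_pos; [apply Rmult_le_pos; [apply pos_INR|auto]|].
    apply Rmult_le_pos; [apply pos_INR|apply Rabs_pos]. }
  set (A0 := Rabs a0).
  assert (HA0 : 0 <= A0) by apply Rabs_pos.
  set (Q := 4 * C * (rho * (3 * rho + A0))).
  assert (HQ : 0 < Q) by (unfold Q; apply Rmult_lt_0_compat; [lra|]; apply Rmult_lt_0_compat; lra).
  set (d := Rmin 1 (1 / Q)).
  assert (Hd : 0 < d) by (unfold d; apply Rmin_pos; [lra|]; apply Rdiv_lt_0_compat; lra).
  assert (Hd1 : d <= 1) by apply Rmin_l.
  assert (HdQ : d * Q <= 1).
  { pose proof (Rmin_r 1 (1/Q)). fold d in H. apply Rmult_le_compat_r with (r := Q) in H; [|lra].
    unfold Rdiv in H. rewrite Rmult_1_l, Rinv_l in H by lra. lra. }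
  set (xs := r * (1 + d)).
  assert (Hxs : Rabs xs <= 2 * rho).
  { unfold xs. rewrite Rabs_mult. fold rho. rewrite (Rabs_right (1 + d)) by lra. nra. }
  assert (Hxs2 : 1 < xs ^ 2).
  { unfold xs. replace ((r * (1 + d)) ^ 2) with ((r * r) * ((1 + d) * (1 + d))) by ring. nra. }
  assert (Hh0 : h a0 b0 xs <= 1 / (4 * C)).
  { assert (E : h a0 b0 xs = h a0 b0 xs - h a0 b0 r) by lra.
    assert (E2 : h a0 b0 xs - h a0 b0 r = (d * r) * (r * (2 + d) + a0)) by (unfold xs, h; ring).
    rewrite E, E2. eapply Rle_trans; [apply Rle_abs|].
    rewrite !Rabs_mult. fold rho. rewrite (Rabs_right d) by lra.
    assert (Rabs (r * (2 + d) + a0) <= 3 * rho + A0).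
    { eapply Rle_trans; [apply Rabs_triang|]. rewrite Rabs_mult. fold rho A0.
      rewrite (Rabs_right (2 + d)) by lra. nra. }
    assert (d * rho * Rabs (r * (2 + d) + a0) <= d * (rho * (3 * rho + A0))).
    { rewrite Rmult_assoc. apply Rmult_le_compat_l; [lra|]. apply Rmult_le_compat_l; lra. }
    assert (d * (rho * (3 * rho + A0)) * (4 * C) <= 1) by (unfold Q in HdQ; lra).
    apply Rle_trans with (d * (rho * (3 * rho + A0))); [lra|].
    unfold Rdiv. rewrite Rmult_1_l. apply (Rmult_le_reg_r (4 * C)); [lra|].
    rewrite Rinv_l by lra. lra. }
  set (eta := Rmin (Rmin 1 (c / 2)) (1 / (8 * C * (2 * rho + 1)))).
  assert (Heta : 0 < eta).
  { unfold eta. apply Rmin_pos; [apply Rmin_pos; lra|]. apply Rdiv_lt_0_compat; [lra|].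
    apply Rmult_lt_0_compat; lra. }
  assert (Heta1 : eta <= 1) by (unfold eta; eapply Rle_trans; [apply Rmin_l|apply Rmin_l]).
  assert (Heta2 : eta <= c / 2) by (unfold eta; eapply Rle_trans; [apply Rmin_l|apply Rmin_r]).
  assert (Heta3 : eta * (2 * rho + 1) <= 1 / (8 * C)).
  { pose proof (Rmin_r (Rmin 1 (c / 2)) (1 / (8 * C * (2 * rho + 1)))). fold eta in H.
    apply Rmult_le_compat_r with (r := 2 * rho + 1) in H; [|lra].
    eapply Rle_trans; [exact H|]. right. field. split; lra. }
  destruct (Ha eta Heta) as [K1 HK1]. destruct (Hb eta Heta) as [K2 HK2].
  exists (max K1 K2). intros k Hk [gs [Hd' Hrep]].
  assert (Hak : Rabs (sa k - a0) < eta) by (apply HK1; lia).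
  assert (Hbk : Rabs (sb k - b0) < eta) by (apply HK2; lia).
  assert (Hnodes : forall j, (j < S M)%nat -> X j ^ 2 < 1 /\ c <= h (sa k) (sb k) (X j)).
  { intros j _. destruct (HX j) as [H1 [H2 H3]]. split; auto.
    pose proof (h_pert a0 (sa k) b0 (sb k) (X j) H2 ltac:(lra)). unfold c in *. lra. }
  pose proof (HB (sa k) (sb k) gs Hnodes Hd' Hrep) as HB'.
  assert (HV : Vsq gs xs <= C).
  { eapply Rle_trans.
    - apply (V_bound M gs xs T (Rabs B)); auto.
      + intros i Hi. apply pow_sq_bound; [|lia].
        rewrite <- (pow2_abs xs). assert (0 <= Rabs xs) by apply Rabs_pos. nra.
      + intros i Hi. destruct (HB' i Hi). eapply Rle_trans; [eassumption|apply Rle_abs].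
    - unfold C. lra. }
  assert (Hhk : h (sa k) (sb k) xs <= 1 / (2 * C)).
  { pose proof (h_pert_up a0 (sa k) b0 (sb k) xs).
    assert (Rabs (sa k - a0) * Rabs xs <= eta * (2 * rho)).
    { apply Rmult_le_compat; try apply Rabs_pos; lra. }
    assert (1 / (2 * C) - (1 / (4 * C) + 1 / (8 * C)) = 1 / (8 * C)) by (field; lra).
    assert (0 < 1 / (8 * C)) by (apply Rdiv_lt_0_compat; lra).
    lra. }
  destruct (proj1 (rep_iff _ _ gs) Hrep xs) as [HU _].
  pose proof (Usq_nonneg gs xs). pose proof (Vsq_nonneg gs xs).
  assert (Hprod : h (sa k) (sb k) xs * Vsq gs xs < 1).
  { destruct (Rle_dec (h (sa k) (sb k) xs) 0). - nra.
    - assert (h (sa k) (sb k) xs * Vsq gs xs <= 1 / (2 * C) * C) by (apply Rmult_le_compat; lra).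
      assert (1 / (2 * C) * C = 1/2) by (field; lra). lra. }
  assert ((1 - xs ^ 2) * (1 - h (sa k) (sb k) xs * Vsq gs xs) < 0) by (apply Rmult_neg_pos; lra).
  lra.
Qed.


Lemma P'_root_side a0 b0 : inP' a0 b0 -> ~ (a0 = 0 /\ b0 = -1) ->
  exists r s, 1 <= r * r /\ h a0 b0 r = 0 /\ s * s = 1 /\ 0 < h a0 b0 s.
Proof.
  unfold inP', h. intros [[H1 H2]|[H1 H2]] Hn.
  - exists (- a0 / 2). destruct (Rlt_dec a0 0).
    + exists (-1). repeat split; nra.
    + exists 1. repeat split; nra.
  - destruct (Rtotal_order a0 0) as [Hlt|[Heq|Hgt]].
    + rewrite Rabs_left in H1 by lra. exists 1, (-1). repeat split; nra.
    + subst. rewrite Rabs_R0 in H1. exfalso. apply Hn. split; lra.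
    + rewrite Rabs_right in H1 by lra. exists (-1), 1. repeat split; nra.
Qed.

Lemma partb : forall (sa sb : nat -> R) (a0 b0 : R),
     (forall k : nat, inP (sa k) (sb k)) ->
     Un_cv sa a0 -> Un_cv sb b0 ->
     inP' a0 b0 -> ~ (a0 = 0 /\ b0 = -1) ->
     forall M : nat, exists K : nat, forall k : nat,
       (K <= k)%nat -> ~ N_le (sa k) (sb k) M.
Proof.
  intros sa sb a0 b0 _ Ha Hb HP Hn M.
  destruct (P'_root_side a0 b0 HP Hn) as [r [s [H1 [H2 [H3 H4]]]]].
  eapply partb_core; eauto.
Qed.


Definition Qf d (G : nat -> nat -> R) (t : nat -> R) :=
  ssum d (fun p => ssum d (fun q => G p q * t p * t q)).

Definition upd (t : nat -> R) m (beta : R) := fun j => if Nat.eqb j m then beta else t j.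

Lemma lsumL_map {X Y} (f : X -> Y) l F : lsumL (map f l) F = lsumL l (fun x => F (f x)).
Proof. induction l; simpl; [reflexivity|]. rewrite IHl. reflexivity. Qed.

Lemma ssum_delta m (F : nat -> R) p : (p < m)%nat ->
  ssum m (fun q => F q * (if Nat.eqb q p then 1 else 0)) = F p.
Proof.
  induction m; intros Hp; [lia|]. simpl.
  destruct (Nat.eq_dec p m) as [->|Hne].
  - rewrite Nat.eqb_refl. rewrite (ssum_ext m _ (fun _ => 0)).
    + rewrite ssum_zero. ring.
    + intros j Hj. destruct (Nat.eqb_spec j m); [lia|ring].
  - rewrite IHm by lia. destruct (Nat.eqb_spec m p); [lia|ring].
Qed.

Lemma Qf_upd m G t beta : (forall p, (p < m)%nat -> G p m = G m p) ->
  Qf (S m) G (upd t m beta) = Qf m G t + 2 * beta * ssum m (fun q => G m q * t q) + G m m * beta ^ 2.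
Proof.
  intros Hs. unfold Qf. simpl ssum. unfold upd. rewrite Nat.eqb_refl.
  rewrite ssum_plus.
  rewrite (ssum_ext m (fun p => ssum m (fun q => G p q * (if Nat.eqb p m then beta else t p) * (if Nat.eqb q m then beta else t q)))
                      (fun p => ssum m (fun q => G p q * t p * t q))).
  2:{ intros p Hp. apply ssum_ext. intros q Hq. destruct (Nat.eqb_spec p m); [lia|]. destruct (Nat.eqb_spec q m); [lia|]. reflexivity. }
  rewrite (ssum_ext m (fun p => G p m * (if Nat.eqb p m then beta else t p) * beta) (fun q => beta * (G m q * t q))).
  2:{ intros p Hp. destruct (Nat.eqb_spec p m); [lia|]. rewrite Hs by auto. ring. }
  rewrite (ssum_ext m (fun q => G m q * beta * (if Nat.eqb q m then beta else t q)) (fun q => beta * (G m q * t q))).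
  2:{ intros q Hq. destruct (Nat.eqb_spec q m); [lia|]. ring. }
  rewrite !ssum_scal. ring.
Qed.

Lemma Qf_ext d G t t' : (forall j, (j < d)%nat -> t j = t' j) -> Qf d G t = Qf d G t'.
Proof. intros H. unfold Qf. apply ssum_ext; intros; apply ssum_ext; intros. rewrite !H by auto. reflexivity. Qed.

Definition ext0 m (w : nat -> R) := fun j => if Nat.ltb j m then w j else 0.

Lemma psd_decomp d : forall G : nat -> nat -> R,
  (forall p q, (p < d)%nat -> (q < d)%nat -> G p q = G q p) ->
  (forall t, 0 <= Qf d G t) ->
  exists ws : list (nat -> R), forall p q, (p < d)%nat -> (q < d)%nat ->
    G p q = lsumL ws (fun w => w p * w q).
Proof.
  induction d as [|m IH]; intros G Hsym Hpsd.
  - exists nil. intros; lia.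
  - assert (Hs : forall p, (p < m)%nat -> G p m = G m p) by (intros; apply Hsym; lia).
    set (S_ := fun t => ssum m (fun q => G m q * t q)).
    assert (Hq : forall t beta, 0 <= Qf m G t + 2 * beta * S_ t + G m m * beta ^ 2).
    { intros t beta. rewrite <- Qf_upd by auto. apply Hpsd. }
    assert (Hg : 0 <= G m m).
    { pose proof (Hq (fun _ => 0) 1). unfold S_ in H.
      rewrite (ssum_ext m _ (fun _ => 0)) in H by (intros; ring). rewrite ssum_zero in H.
      unfold Qf in H. rewrite (ssum_ext m _ (fun _ => 0)) in H.
      2:{ intros; rewrite (ssum_ext m _ (fun _ => 0)) by (intros; ring). apply ssum_zero. }
      rewrite ssum_zero in H. lra. }
    destruct (Req_dec (G m m) 0) as [Hg0|Hg0].
    +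
      assert (HS0 : forall t, S_ t = 0).
      { intros t. destruct (Req_dec (S_ t) 0) as [E|E]; auto. exfalso.
        pose proof (Hq t (- (Qf m G t + 1) / (2 * S_ t))). rewrite Hg0 in H.
        replace (Qf m G t + 2 * (- (Qf m G t + 1) / (2 * S_ t)) * S_ t + 0 * (- (Qf m G t + 1) / (2 * S_ t)) ^ 2) with (-1) in H by (field; auto).
        lra. }
      assert (HGm : forall q, (q < m)%nat -> G m q = 0).
      { intros q Hq'. pose proof (HS0 (fun j => if Nat.eqb j q then 1 else 0)). unfold S_ in H.
        rewrite ssum_delta in H; auto. }
      destruct (IH G) as [ws' Hws'].
      { intros; apply Hsym; lia. }
      { intros t. pose proof (Hq t 0). lra. }
      exists (map (ext0 m) ws'). intros p q Hp Hq'. rewrite lsumL_map.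
      unfold ext0. destruct (Nat.ltb_spec p m) as [Hpm|Hpm]; destruct (Nat.ltb_spec q m) as [Hqm|Hqm].
      * apply Hws'; auto.
      * assert (q = m) by lia. subst q. rewrite Hs, HGm by auto.
        rewrite (lsumL_ext _ _ (fun _ => 0)) by (intros; ring). clear. induction ws'; simpl; lra.
      * assert (p = m) by lia. subst p. rewrite HGm by auto.
        rewrite (lsumL_ext _ _ (fun _ => 0)) by (intros; ring). clear. induction ws'; simpl; lra.
      * assert (p = m) by lia. assert (q = m) by lia. subst. rewrite Hg0.
        rewrite (lsumL_ext _ _ (fun _ => 0)) by (intros; ring). clear. induction ws'; simpl; lra.
    + assert (Hgp : 0 < G m m) by lra.
      set (g := G m m) in *.
      set (G' := fun p q => G p q - G p m * G m q / g).
      destruct (IH G') as [ws' Hws'].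
      { intros p q Hp Hq'. unfold G'. rewrite (Hsym p q) by lia. rewrite (Hs p), (Hs q) by auto. unfold Rdiv. ring. }
      { intros t. pose proof (Hq t (- S_ t / g)).
        assert (E : Qf m G' t = Qf m G t - S_ t ^ 2 / g).
        { unfold Qf, G'.
          rewrite (ssum_ext m _ (fun p => ssum m (fun q => G p q * t p * t q) - ssum m (fun q => (G m p * t p) * (G m q * t q)) / g)).
          2:{ intros p Hp. unfold Rdiv. rewrite <- ssum_scal_r, <- ssum_minus.
              apply ssum_ext. intros q _. rewrite Hs by auto. ring. }
          rewrite ssum_minus. unfold Rdiv. rewrite ssum_scal_r. rewrite <- ssum_mult. unfold S_. field. lra. }
        rewrite E. replace (Qf m G t + 2 * (- S_ t / g) * S_ t + g * (- S_ t / g) ^ 2) with (Qf m G t - S_ t ^ 2 / g) in H by (field; lra).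
        exact H. }
      set (w0 := fun j => G j m / sqrt g).
      assert (Hsq : sqrt g * sqrt g = g) by (apply sqrt_sqrt; lra).
      assert (Hsq0 : 0 < sqrt g) by (apply sqrt_lt_R0; lra).
      exists (w0 :: map (ext0 m) ws'). intros p q Hp Hq'. simpl lsumL. rewrite lsumL_map.
      unfold ext0, w0. destruct (Nat.ltb_spec p m) as [Hpm|Hpm]; destruct (Nat.ltb_spec q m) as [Hqm|Hqm].
      * rewrite <- Hws' by auto. unfold G'. rewrite (Hs q) by auto.
        replace (G p m / sqrt g * (G m q / sqrt g)) with (G p m * G m q / (sqrt g * sqrt g)) by (field; lra).
        rewrite Hsq. ring.
      * assert (q = m) by lia. subst q.
        rewrite (lsumL_ext _ _ (fun _ => 0)) by (intros; ring).
        assert (lsumL ws' (fun _ : nat -> R => 0) = 0) by (clear; induction ws'; simpl; lra).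
        rewrite H. fold g. replace (G p m / sqrt g * (g / sqrt g)) with (G p m * g / (sqrt g * sqrt g)) by (field; lra).
        rewrite Hsq. field. lra.
      * assert (p = m) by lia. subst p.
        rewrite (lsumL_ext _ _ (fun _ => 0)) by (intros; ring).
        assert (lsumL ws' (fun _ : nat -> R => 0) = 0) by (clear; induction ws'; simpl; lra).
        rewrite H. fold g. rewrite (Hs q) by auto. replace (g / sqrt g * (G m q / sqrt g)) with (G m q * g / (sqrt g * sqrt g)) by (field; lra).
        rewrite Hsq. field. lra.
      * assert (p = m) by lia. assert (q = m) by lia. subst.
        rewrite (lsumL_ext _ _ (fun _ => 0)) by (intros; ring).
        assert (lsumL ws' (fun _ : nat -> R => 0) = 0) by (clear; induction ws'; simpl; lra).
        rewrite H. fold g. replace (g / sqrt g * (g / sqrt g)) with (g * g / (sqrt g * sqrt g)) by (field; lra).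
        rewrite Hsq. field. lra.
Qed.


Definition cv e (g : list R * list R) p :=
  if Nat.ltb p (S e) then nth p (fst g) 0 else nth (p - S e) (snd g) 0.
Definition Gram e (gs : list (list R * list R)) p q := lsumL gs (fun g => cv e g p * cv e g q).

Definition AU e (G : nat -> nat -> R) x := ssum (S e) (fun p => ssum (S e) (fun q => G p q * x ^ p * x ^ q)).
Definition AV e (G : nat -> nat -> R) x := ssum (e - 1) (fun p => ssum (e - 1) (fun q => G (S e + p)%nat (S e + q)%nat * x ^ p * x ^ q)).
Definition AW e (G : nat -> nat -> R) x := ssum (S e) (fun p => ssum (e - 1) (fun q => G p (S e + q)%nat * x ^ p * x ^ q)).

Lemma prod_sum_form {X} (gs : list X) (A B : X -> list R) n m x :
  (forall g, In g gs -> (length (A g) <= n)%nat /\ (length (B g) <= m)%nat) ->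
  lsumL gs (fun g => peval (A g) x * peval (B g) x) =
  ssum n (fun p => ssum m (fun q => lsumL gs (fun g => nth p (A g) 0 * nth q (B g) 0) * x ^ p * x ^ q)).
Proof.
  intros H.
  rewrite (lsumL_ext gs _ (fun g => ssum n (fun p => ssum m (fun q => x ^ p * x ^ q * (nth p (A g) 0 * nth q (B g) 0))))).
  2:{ intros g Hg. destruct (H g Hg). rewrite (peval_ssum (A g) n), (peval_ssum (B g) m) by auto.
      rewrite ssum_mult. apply ssum_ext; intros; apply ssum_ext; intros. ring. }
  rewrite lsumL_ssum. apply ssum_ext. intros p _. rewrite lsumL_ssum. apply ssum_ext. intros q _.
  rewrite lsumL_scal. ring.
Qed.

Lemma bridge e gs x : Forall (fun gi => delta_le gi e) gs ->
  Usq gs x = AU e (Gram e gs) x /\ Vsq gs x = AV e (Gram e gs) x /\ Wuv gs x = AW e (Gram e gs) x.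
Proof.
  intros Hd. rewrite Forall_forall in Hd. unfold delta_le in Hd.
  split; [|split].
  - unfold Usq. rewrite (lsumL_ext gs _ (fun g => peval (fst g) x * peval (fst g) x)) by (intros; ring).
    rewrite (prod_sum_form gs fst fst (S e) (S e)) by (intros g Hg; destruct (Hd g Hg); split; lia).
    unfold AU, Gram. apply ssum_ext; intros p Hp; apply ssum_ext; intros q Hq. unfold cv.
    apply Nat.ltb_lt in Hp. apply Nat.ltb_lt in Hq. rewrite Hp, Hq. reflexivity.
  - unfold Vsq. rewrite (lsumL_ext gs _ (fun g => peval (snd g) x * peval (snd g) x)) by (intros; ring).
    rewrite (prod_sum_form gs snd snd (e - 1) (e - 1)) by (intros g Hg; destruct (Hd g Hg); split; lia).
    unfold AV, Gram. apply ssum_ext; intros p Hp; apply ssum_ext; intros q Hq. unfold cv.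
    assert (E1 : Nat.ltb (S e + p) (S e) = false) by (apply Nat.ltb_ge; lia).
    assert (E2 : Nat.ltb (S e + q) (S e) = false) by (apply Nat.ltb_ge; lia).
    rewrite E1, E2. replace (S e + p - S e)%nat with p by lia. replace (S e + q - S e)%nat with q by lia. reflexivity.
  - unfold Wuv.
    rewrite (prod_sum_form gs fst snd (S e) (e - 1)) by (intros g Hg; destruct (Hd g Hg); split; lia).
    unfold AW, Gram. apply ssum_ext; intros p Hp; apply ssum_ext; intros q Hq. unfold cv.
    apply Nat.ltb_lt in Hp. rewrite Hp.
    assert (E2 : Nat.ltb (S e + q) (S e) = false) by (apply Nat.ltb_ge; lia).
    rewrite E2. replace (S e + q - S e)%nat with q by lia. reflexivity.
Qed.

Definition mkg e (w : nat -> R) : list R * list R :=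
  (map w (seq 0 (S e)), map (fun p => w (S e + p)%nat) (seq 0 (e - 1))).

Lemma nth_map_seq (w : nat -> R) n p : (p < n)%nat -> nth p (map w (seq 0 n)) 0 = w p.
Proof.
  intros Hp. rewrite (nth_indep _ 0 (w 0%nat)) by (rewrite length_map, length_seq; auto).
  rewrite map_nth, seq_nth by auto. reflexivity.
Qed.

Lemma cv_mkg e w p : (p < S e + (e - 1))%nat -> cv e (mkg e w) p = w p.
Proof.
  intros Hp. unfold cv, mkg; cbn [fst snd]. destruct (Nat.ltb_spec p (S e)).
  - apply nth_map_seq; auto.
  - rewrite (nth_map_seq (fun p0 => w (S e + p0)%nat)) by lia. f_equal. lia.
Qed.

Lemma mkg_delta e w : delta_le (mkg e w) e.
Proof. unfold delta_le, mkg; cbn [fst snd]. rewrite !length_map, !length_seq. lia. Qed.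

Lemma Qf_Gram e gs t :
  Qf (S e + (e - 1)) (Gram e gs) t = lsumL gs (fun g => (ssum (S e + (e - 1)) (fun p => cv e g p * t p))^2).
Proof.
  set (d := (S e + (e - 1))%nat). unfold Qf, Gram.
  rewrite (lsumL_ext gs _ (fun g => ssum d (fun p => ssum d (fun q => (cv e g p * t p) * (cv e g q * t q))))).
  2:{ intros g _. unfold pow. rewrite Rmult_1_r, ssum_mult. reflexivity. }
  rewrite lsumL_ssum. apply ssum_ext. intros p _. rewrite lsumL_ssum. apply ssum_ext. intros q _.
  rewrite (lsumL_ext gs (fun g => (cv e g p * t p) * (cv e g q * t q)) (fun g => (t p * t q) * (cv e g p * cv e g q))) by (intros; ring).
  rewrite lsumL_scal. ring.
Qed.

Lemma Gram_sym e gs p q : Gram e gs p q = Gram e gs q p.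
Proof. unfold Gram. apply lsumL_ext. intros; ring. Qed.

Lemma Gram_psd e gs t : 0 <= Qf (S e + (e - 1)) (Gram e gs) t.
Proof. rewrite Qf_Gram. apply lsumL_nonneg. intros; apply pow2_ge_0. Qed.

Lemma Gram_bound e gs B : Forall (fun gi => delta_le gi e) gs ->
  (forall i, (i < S e)%nat -> lsumL gs (fun g => (nth i (fst g) 0)^2) <= B /\ lsumL gs (fun g => (nth i (snd g) 0)^2) <= B) ->
  forall p q, (p < S e + (e - 1))%nat -> (q < S e + (e - 1))%nat -> Rabs (Gram e gs p q) <= B.
Proof.
  intros Hd HB.
  assert (Hc : forall p, (p < S e + (e - 1))%nat -> lsumL gs (fun g => (cv e g p)^2) <= B).
  { intros p Hp. unfold cv. destruct (Nat.ltb_spec p (S e)).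
    - apply HB; auto.
    - apply HB. lia. }
  intros p q Hp Hq. unfold Gram. apply Rabs_le. split.
  - apply Rle_trans with (lsumL gs (fun g => - ((cv e g p)^2 + (cv e g q)^2) / 2)).
    + rewrite (lsumL_ext gs _ (fun g => (-/2) * ((cv e g p)^2 + (cv e g q)^2))) by (intros; unfold Rdiv; ring).
      rewrite lsumL_scal, lsumL_plus. pose proof (Hc p Hp). pose proof (Hc q Hq). lra.
    + apply lsumL_le. intros g _. pose proof (pow2_ge_0 (cv e g p + cv e g q)). unfold Rdiv. nra.
  - apply Rle_trans with (lsumL gs (fun g => ((cv e g p)^2 + (cv e g q)^2) / 2)).
    + apply lsumL_le. intros g _. pose proof (pow2_ge_0 (cv e g p - cv e g q)). unfold Rdiv. nra.
    + rewrite (lsumL_ext gs _ (fun g => (/2) * ((cv e g p)^2 + (cv e g q)^2))) by (intros; unfold Rdiv; ring).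
      rewrite lsumL_scal, lsumL_plus. pose proof (Hc p Hp). pose proof (Hc q Hq). lra.
Qed.


Lemma my_choice {A B : Type} (P : A -> B -> Prop) : (forall a, exists b, P a b) -> exists f, forall a, P a (f a).
Proof.
  intros H. exists (fun a => proj1_sig (constructive_indefinite_description _ (H a))).
  intros a. exact (proj2_sig (constructive_indefinite_description _ (H a))).
Qed.

Lemma inv_small eps : 0 < eps -> exists N, forall k, (N <= k)%nat -> / (INR k + 1) < eps.
Proof.
  intros He. destruct (archimed_cor1 eps He) as [N [HN HN0]]. exists N. intros k Hk.
  apply Rle_lt_trans with (/ INR N); auto.
  apply Rinv_le_contravar. apply lt_0_INR; auto.
  apply le_INR in Hk. lra.
Qed.

Definition incr (phi : nat -> nat) := forall k, (phi k < phi (S k))%nat.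

Lemma incr_lt phi : incr phi -> forall m n, (m < n)%nat -> (phi m < phi n)%nat.
Proof.
  intros H m n Hmn. induction Hmn. - apply H. - specialize (H m0). lia.
Qed.

Lemma incr_ge phi : incr phi -> forall k, (k <= phi k)%nat.
Proof. intros H k. induction k; [lia|]. specialize (H k). lia. Qed.

Lemma subseq_cv u l phi : Un_cv u l -> incr phi -> Un_cv (fun k => u (phi k)) l.
Proof.
  intros Hu Hp eps He. destruct (Hu eps He) as [N HN]. exists N. intros k Hk.
  apply HN. pose proof (incr_ge phi Hp k). lia.
Qed.

Lemma BW1 (u : nat -> R) B : (forall k, Rabs (u k) <= B) ->
  exists phi, incr phi /\ exists l, Un_cv (fun k => u (phi k)) l.
Proof.
  intros HB.
  destruct (Bolzano_Weierstrass u (fun x => -B <= x <= B) (compact_P3 (-B) B)) as [l Hl].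
  { intros k. specialize (HB k). pose proof (Rle_abs (u k)). pose proof (Rle_abs (- u k)). rewrite Rabs_Ropp in H0. lra. }
  assert (Hp : forall N k : nat, exists p, (N <= p)%nat /\ Rabs (u p - l) < / (INR k + 1)).
  { intros N k. assert (Hpos : 0 < / (INR k + 1)). { apply Rinv_0_lt_compat. pose proof (pos_INR k). lra. }
    destruct (Hl (disc l (mkposreal _ Hpos)) N) as [p [Hp1 Hp2]].
    - exists (mkposreal _ Hpos). intros y Hy. exact Hy.
    - exists p. split; [exact Hp1|]. exact Hp2. }
  destruct (my_choice (fun (Nk : nat * nat) p => (fst Nk <= p)%nat /\ Rabs (u p - l) < / (INR (snd Nk) + 1)))
    as [pick Hpick].
  { intros [N k]. apply Hp. }
  set (phi := fix phi k := match k with O => pick (O, O) | S k' => pick (S (phi k'), S k') end).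
  exists phi. split.
  - intros k. simpl. destruct (Hpick (S (phi k), S k)) as [H1 _]. simpl in H1. lia.
  - exists l. intros eps He. destruct (inv_small eps He) as [N HN]. exists N. intros k Hk.
    unfold Rdist. apply Rlt_trans with (/ (INR k + 1)); [|apply HN; auto].
    destruct k; simpl.
    + destruct (Hpick (O, O)) as [_ H2]. exact H2.
    + destruct (Hpick (S (phi k), S k)) as [_ H2]. exact H2.
Qed.

Definition peqb (i j : nat * nat) := andb (Nat.eqb (fst i) (fst j)) (Nat.eqb (snd i) (snd j)).

Lemma peqb_spec i j : peqb i j = true <-> i = j.
Proof.
  destruct i, j; unfold peqb; simpl. rewrite Bool.andb_true_iff, !Nat.eqb_eq. split.
  - intros [-> ->]; auto. - intros E; inversion E; auto.
Qed.

Lemma BWlist (I : list (nat * nat)) (f : nat -> nat * nat -> R) B :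
  (forall k i, In i I -> Rabs (f k i) <= B) ->
  exists phi, incr phi /\ exists L : nat * nat -> R, forall i, In i I -> Un_cv (fun k => f (phi k) i) (L i).
Proof.
  induction I as [|i0 I IH]; intros HB.
  - exists (fun k => k). split; [intros k; lia|]. exists (fun _ => 0). intros i [].
  - destruct IH as [phi [Hphi [L' HL']]]. { intros k i Hi. apply HB. right; auto. }
    destruct (BW1 (fun k => f (phi k) i0) B) as [psi [Hpsi [l Hl]]].
    { intros k. apply HB. left; auto. }
    exists (fun k => phi (psi k)). split.
    + intros k. apply incr_lt; auto.
    + exists (fun i => if peqb i i0 then l else L' i). intros i Hi.
      destruct (peqb i i0) eqn:E.
      * apply peqb_spec in E. subst. exact Hl.
      * destruct Hi as [Hi|Hi].
        -- subst. exfalso. assert (peqb i i = true) by (apply peqb_spec; auto). congruence.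
        -- apply (subseq_cv (fun k => f (phi k) i)); auto.
Qed.


Lemma cv_const c : Un_cv (fun _ => c) c.
Proof. intros eps He. exists O. intros. unfold Rdist. rewrite Rminus_diag, Rabs_R0. lra. Qed.

Lemma cv_scal_r u l c : Un_cv u l -> Un_cv (fun k => u k * c) (l * c).
Proof. intros H. apply CV_mult; auto. apply cv_const. Qed.

Lemma ssum_cv n (F : nat -> nat -> R) l : (forall j, (j < n)%nat -> Un_cv (fun k => F k j) (l j)) ->
  Un_cv (fun k => ssum n (F k)) (ssum n l).
Proof.
  induction n; intros H; simpl. - apply cv_const.
  - apply CV_plus. + apply IHn. intros; apply H; lia. + apply H; lia.
Qed.

Lemma cv_nonneg u l : Un_cv u l -> (forall k, 0 <= u k) -> 0 <= l.
Proof.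
  intros Hu Hp. destruct (Rle_dec 0 l) as [|Hn]; auto. exfalso.
  destruct (Hu (- l / 2)) as [N HN]. { lra. }
  specialize (HN N (Nat.le_refl N)). unfold Rdist in HN. specialize (Hp N).
  pose proof (Rle_abs (u N - l)). lra.
Qed.

Section Lims.
Variable e : nat.
Let d := (S e + (e - 1))%nat.

Lemma dd_cv (Gs : nat -> nat -> nat -> R) G (n1 n2 : nat) (o1 o2 : nat) (w : nat -> nat -> R) :
  (forall p q, (p < d)%nat -> (q < d)%nat -> Un_cv (fun k => Gs k p q) (G p q)) ->
  (o1 + n1 <= d)%nat -> (o2 + n2 <= d)%nat ->
  Un_cv (fun k => ssum n1 (fun p => ssum n2 (fun q => Gs k (o1 + p)%nat (o2 + q)%nat * w p q)))
        (ssum n1 (fun p => ssum n2 (fun q => G (o1 + p)%nat (o2 + q)%nat * w p q))).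
Proof.
  intros HG H1 H2. apply ssum_cv. intros p Hp. apply (ssum_cv n2 (fun k q => Gs k (o1 + p)%nat (o2 + q)%nat * w p q)).
  intros q Hq. apply cv_scal_r. apply HG; lia.
Qed.
End Lims.

Lemma h_cv A B a b x : Un_cv A a -> Un_cv B b -> Un_cv (fun k => h (A k) (B k) x) (h a b x).
Proof.
  intros HA HB. unfold h. apply CV_plus; auto. apply CV_plus. apply cv_const. apply cv_scal_r. auto.
Qed.

Lemma cv_ext (un vn : nat -> R) l : (forall k, un k = vn k) -> Un_cv un l -> Un_cv vn l.
Proof. intros E H eps He. destruct (H eps He) as [N HN]. exists N. intros k Hk. rewrite <- E. auto. Qed.


Lemma AU_form e G x : AU e G x = ssum (S e) (fun p => ssum (S e) (fun q => G (0 + p)%nat (0 + q)%nat * (x ^ p * x ^ q))).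
Proof. unfold AU. apply ssum_ext; intros; apply ssum_ext; intros. simpl. ring. Qed.
Lemma AV_form e G x : AV e G x = ssum (e - 1) (fun p => ssum (e - 1) (fun q => G (S e + p)%nat (S e + q)%nat * (x ^ p * x ^ q))).
Proof. unfold AV. apply ssum_ext; intros; apply ssum_ext; intros. ring. Qed.
Lemma AW_form e G x : AW e G x = ssum (S e) (fun p => ssum (e - 1) (fun q => G (0 + p)%nat (S e + q)%nat * (x ^ p * x ^ q))).
Proof. unfold AW. apply ssum_ext; intros; apply ssum_ext; intros. simpl. ring. Qed.
Lemma Qf_form d G t : Qf d G t = ssum d (fun p => ssum d (fun q => G (0 + p)%nat (0 + q)%nat * (t p * t q))).
Proof. unfold Qf. apply ssum_ext; intros; apply ssum_ext; intros. simpl. ring. Qed.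

Lemma parta n : rel_closed_in inP (fun a b => inP a b /\ N_le a b n).
Proof.
  intros a b HP Hcl. split; [exact HP|].
  set (d := (S n + (n - 1))%nat).
  destruct (my_choice (fun (k : nat) (t : R * R * list (list R * list R)) =>
      Rabs (fst (fst t) - a) < / (INR k + 1) /\ Rabs (snd (fst t) - b) < / (INR k + 1) /\
      Forall (fun gi => delta_le gi n) (snd t) /\
      cr_eq one_minus_x2 (cr_sumsq (fst (fst t)) (snd (fst t)) (snd t)))) as [T HT].
  { intros k. assert (Hk : / (INR k + 1) > 0). { apply Rinv_0_lt_compat. pose proof (pos_INR k). lra. }
    destruct (Hcl _ Hk) as [a' [b' [_ [[_ [gs [Hg1 Hg2]]] [H1 H2]]]]].
    exists (a', b', gs). simpl. auto. }
  set (Ak := fun k => fst (fst (T k))). set (Bk := fun k => snd (fst (T k))). set (GS := fun k => snd (T k)).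
  assert (Hh1 : 0 < h a b 1).
  { destruct HP as [_ HP]. apply HP. rewrite Rabs_R1. lra. }
  destruct (good_nodes a b 1 ltac:(ring) Hh1) as [X [HXok HX]].
  set (c := h a b 1 / 4). assert (Hc : 0 < c) by (unfold c; lra).
  destruct (coef_bound n X c (HXok (S n)) Hc) as [Bc HBc].
  set (eta := Rmin 1 (c / 2)).
  assert (Heta : 0 < eta) by (unfold eta; apply Rmin_pos; lra).
  destruct (inv_small eta Heta) as [K0 HK0].
  assert (Hbnd : forall m, (K0 <= m)%nat -> forall p q, (p < d)%nat -> (q < d)%nat -> Rabs (Gram n (GS m) p q) <= Bc).
  { intros m Hm. destruct (HT m) as [H1 [H2 [H3 H4]]].
    pose proof (HK0 m Hm).
    assert (Hnodes : forall j, (j < S n)%nat -> X j ^ 2 < 1 /\ c <= h (Ak m) (Bk m) (X j)).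
    { intros j _. destruct (HX j) as [Hx1 [Hx2 Hx3]]. split; auto.
      assert (Rabs (Ak m - a) <= 1 /\ Rabs (Ak m - a) <= c / 2 /\ Rabs (Bk m - b) <= c / 2).
      { unfold eta in H. pose proof (Rmin_l 1 (c/2)). pose proof (Rmin_r 1 (c/2)). unfold Ak, Bk. lra. }
      pose proof (h_pert a (Ak m) b (Bk m) (X j) Hx2 ltac:(lra)). unfold c in *. lra. }
    apply Gram_bound; [exact H3|]. intros i Hi. apply (HBc (Ak m) (Bk m) (GS m)); auto. }
  set (I := list_prod (seq 0 d) (seq 0 d)).
  assert (HI : forall p q, In (p, q) I <-> (p < d)%nat /\ (q < d)%nat).
  { intros p q. unfold I. rewrite in_prod_iff, !in_seq. lia. }
  destruct (BWlist I (fun k i => Gram n (GS (K0 + k)%nat) (fst i) (snd i)) Bc) as [phi [Hphi [L HL]]].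
  { intros k [p q] Hi. apply HI in Hi. apply Hbnd; [lia|tauto|tauto]. }
  set (G := fun p q => L (p, q)).
  set (Gs := fun k p q => Gram n (GS (K0 + phi k)%nat) p q).
  assert (HG : forall p q, (p < d)%nat -> (q < d)%nat -> Un_cv (fun k => Gs k p q) (G p q)).
  { intros p q Hp Hq. apply (HL (p, q)). apply HI; auto. }
  assert (Hmon : forall k, (k <= K0 + phi k)%nat) by (intros k; pose proof (incr_ge phi Hphi k); lia).
  assert (HA : Un_cv (fun k => Ak (K0 + phi k)%nat) a).
  { intros eps He. destruct (inv_small eps He) as [N HN]. exists N. intros k Hk. unfold Rdist.
    destruct (HT (K0 + phi k)%nat) as [H1 _]. eapply Rlt_trans; [exact H1|]. apply HN. specialize (Hmon k). lia. }
  assert (HB : Un_cv (fun k => Bk (K0 + phi k)%nat) b).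
  { intros eps He. destruct (inv_small eps He) as [N HN]. exists N. intros k Hk. unfold Rdist.
    destruct (HT (K0 + phi k)%nat) as [_ [H1 _]]. eapply Rlt_trans; [exact H1|]. apply HN. specialize (Hmon k). lia. }
  assert (Hsym : forall p q, (p < d)%nat -> (q < d)%nat -> G p q = G q p).
  { intros p q Hp Hq. apply (UL_sequence (fun k => Gs k p q)). apply HG; auto.
    apply (cv_ext (fun k => Gs k q p)); [intros; unfold Gs; apply Gram_sym|apply HG; auto]. }
  assert (Hpsd : forall t, 0 <= Qf d G t).
  { intros t. apply (cv_nonneg (fun k => Qf d (Gs k) t)).
    - rewrite Qf_form. eapply cv_ext; [intros k; symmetry; apply Qf_form|].
      apply (dd_cv n Gs G d d 0 0); auto; lia.
    - intros k. apply Gram_psd. }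
  assert (Hid : forall x, AU n G x = (1 - x ^ 2) * (1 - h a b x * AV n G x) /\ AW n G x = 0).
  { intros x.
    assert (HU : Un_cv (fun k => AU n (Gs k) x) (AU n G x)).
    { rewrite AU_form. eapply cv_ext; [intros k; symmetry; apply AU_form|].
      apply (dd_cv n Gs G (S n) (S n) 0 0); auto; unfold d; lia. }
    assert (HV : Un_cv (fun k => AV n (Gs k) x) (AV n G x)).
    { rewrite AV_form. eapply cv_ext; [intros k; symmetry; apply AV_form|].
      apply (dd_cv n Gs G (n - 1) (n - 1) (S n) (S n)); auto; unfold d; lia. }
    assert (HW : Un_cv (fun k => AW n (Gs k) x) (AW n G x)).
    { rewrite AW_form. eapply cv_ext; [intros k; symmetry; apply AW_form|].
      apply (dd_cv n Gs G (S n) (n - 1) 0 (S n)); auto; unfold d; lia. }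
    assert (Hk : forall k, AU n (Gs k) x = (1 - x ^ 2) * (1 - h (Ak (K0 + phi k)%nat) (Bk (K0 + phi k)%nat) x * AV n (Gs k) x)
                      /\ AW n (Gs k) x = 0).
    { intros k. destruct (HT (K0 + phi k)%nat) as [_ [_ [H3 H4]]].
      destruct (bridge n (GS (K0 + phi k)%nat) x H3) as [E1 [E2 E3]].
      destruct (proj1 (rep_iff _ _ _) H4 x) as [F1 F2].
      change (AU n (Gram n (GS (K0+phi k)%nat)) x = (1 - x^2) * (1 - h (Ak (K0 + phi k)%nat) (Bk (K0+phi k)%nat) x * AV n (Gram n (GS (K0+phi k)%nat)) x) /\ AW n (Gram n (GS (K0+phi k)%nat)) x = 0).
      rewrite <- E1, <- E2, <- E3. split; [exact F1|exact F2]. }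
    split.
    - apply (UL_sequence (fun k => AU n (Gs k) x)); auto.
      apply (cv_ext (fun k => (1 - x ^ 2) * (1 - h (Ak (K0 + phi k)%nat) (Bk (K0 + phi k)%nat) x * AV n (Gs k) x))).
      { intros k. symmetry. apply (proj1 (Hk k)). }
      apply CV_mult. apply cv_const. apply CV_minus. apply cv_const. apply CV_mult; auto. apply h_cv; auto.
    - apply (UL_sequence (fun k => AW n (Gs k) x)); auto.
      apply (cv_ext (fun _ => 0)). { intros k. symmetry. apply (proj2 (Hk k)). } apply cv_const. }
  destruct (psd_decomp d G Hsym Hpsd) as [ws Hws].
  exists (map (mkg n) ws). split.
  - apply Forall_forall. intros g Hg. apply in_map_iff in Hg. destruct Hg as [w [<- _]]. apply mkg_delta.
  - assert (HGr : forall p q, (p < d)%nat -> (q < d)%nat -> Gram n (map (mkg n) ws) p q = G p q).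
    { intros p q Hp Hq. unfold Gram. rewrite lsumL_map. rewrite Hws by auto.
      apply lsumL_ext. intros w _. rewrite !cv_mkg by auto. reflexivity. }
    assert (HF : Forall (fun gi => delta_le gi n) (map (mkg n) ws)).
    { apply Forall_forall. intros g Hg. apply in_map_iff in Hg. destruct Hg as [w [<- _]]. apply mkg_delta. }
    apply rep_iff. intros x. destruct (bridge n _ x HF) as [E1 [E2 E3]].
    rewrite E1, E2, E3.
    assert (EU : AU n (Gram n (map (mkg n) ws)) x = AU n G x).
    { unfold AU. apply ssum_ext; intros p Hp; apply ssum_ext; intros q Hq. rewrite HGr by (unfold d; lia). reflexivity. }
    assert (EV : AV n (Gram n (map (mkg n) ws)) x = AV n G x).
    { unfold AV. apply ssum_ext; intros p Hp; apply ssum_ext; intros q Hq. rewrite HGr by (unfold d; lia). reflexivity. }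
    assert (EW : AW n (Gram n (map (mkg n) ws)) x = AW n G x).
    { unfold AW. apply ssum_ext; intros p Hp; apply ssum_ext; intros q Hq. rewrite HGr by (unfold d; lia). reflexivity. }
    rewrite EU, EV, EW. apply Hid.
Qed.

Theorem corollary4p6 :
  (forall n : nat,
     rel_closed_in inP (fun a b => inP a b /\ N_le a b n)) /\
  (forall (sa sb : nat -> R) (a0 b0 : R),
     (forall k : nat, inP (sa k) (sb k)) ->
     Un_cv sa a0 -> Un_cv sb b0 ->
     inP' a0 b0 -> ~ (a0 = 0 /\ b0 = -1) ->
     forall M : nat, exists K : nat, forall k : nat,
       (K <= k)%nat -> ~ N_le (sa k) (sb k) M).
Proof.
  split.
  - exact parta.
  - exact partb.
Qed.
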